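(* There exist integers $n\ge2$ and $D\ge1$ and a set $X_n=\{\mathbf{x}^0,\ldots,\mathbf{x}^{n-1}\}\subseteq\{0,1\}^D$ of $n$ pairwise distinct vectors such that there is no three-layer Boolean threshold network with layer sizes $D$, $\lceil\log_2 n\rceil$, $D$ that is a perfect autoencoder for $X_n$ (with the second layer as middle layer).
   Context: A Boolean threshold function is a map $\{0,1\}^h\to\{0,1\}$, $\mathbf{u}\mapsto[\mathbf{w}\cdot\mathbf{u}\ge\theta]$ (value $1$ iff $\mathbf{w}\cdot\mathbf{u}\ge\theta$) with $\mathbf{w}\in\mathbb{Z}^h,\theta\in\mathbb{Z}$. A three-layer Boolean threshold network with layer sizes $D,d,D$ consists of maps $\mathbf{f}:\{0,1\}^D\to\{0,1\}^d$ and $\mathbf{g}:\{0,1\}^d\to\{0,1\}^D$ each of whose coordinates is a Boolean threshold function, computing $\mathbf{x}\mapsto\mathbf{g}(\mathbf{f}(\mathbf{x}))$. It is a perfect autoencoder for $X_n$ if $\mathbf{g}(\mathbf{f}(\mathbf{x}^i))=\mathbf{x}^i$ for all $i$. *)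

(* Defs.v *)
From mathcomp Require Import all_boot all_order all_algebra.
Set Implicit Arguments. Unset Strict Implicit. Unset Printing Implicit Defensive.
Import GRing.Theory Num.Theory.
Local Open Scope ring_scope.

Definition bvec (h : nat) := {ffun 'I_h -> bool}.

Definition is_threshold_fun (h : nat) (t : bvec h -> bool) : Prop :=
  exists (w : 'I_h -> int) (theta : int),
    forall u : bvec h, t u = (theta <= \sum_(i < h) w i * (u i : nat)%:Z).

Definition threshold_layer (a b : nat) (F : bvec a -> bvec b) : Prop :=
  forall j : 'I_b, is_threshold_fun (fun u => F u j).

Definition perfect_autoencoder (D d n : nat) (x : 'I_n -> bvec D) : Prop :=
  exists (f : bvec D -> bvec d) (g : bvec d -> bvec D),
    threshold_layer f /\ threshold_layer g /\ forall i, g (f (x i)) = x i.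
Arguments perfect_autoencoder D d n x : clear implicits.

(* Main.v *)
Require Import Defs.
From mathcomp Require Import all_boot all_order all_algebra.
From mathcomp Require Import zify.
Import GRing.Theory Num.Theory.

Definition xorp (t : bool * bool -> bool) : Prop :=
  t (false, false) = t (true, true) /\ t (false, true) = t (true, false) /\
  t (false, false) <> t (false, true).

Definition mk (p : bool * bool) : bvec 2 :=
  [ffun k : 'I_2 => if k == ord0 then p.1 else p.2].

Lemma nonxor (t : bvec 2 -> bool) : is_threshold_fun t -> ~ xorp (fun p => t (mk p)).
Proof.
move=> [w [th H]] [E1 [E2 E3]].
move: E1 E2 E3; rewrite !H !big_ord_recl !big_ord0 /= !ffunE /=.
set a := w ord0; set b := w _.
rewrite !mulr0 !mulr1 !addr0 !add0r.
case: (boolP (th <= 0)%R) => h1; case: (boolP (th <= a + b)%R) => h2;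
case: (boolP (th <= a)%R) => h3; case: (boolP (th <= b)%R) => h4 //=; move=> *; (try congruence); lia.
Qed.

Definition xf (i : 'I_4) (j : 'I_3) : bool := (i != 0 :> nat) && (i != j.+1 :> nat).
Definition xx (i : 'I_4) : bvec 3 := [ffun j => xf i j].

Lemma comb (p0 p1 p2 p3 : bool*bool) (G0 G1 G2 : bool*bool -> bool):
 p0<>p1 -> p0<>p2 -> p0<>p3 -> p1<>p2 -> p1<>p3 -> p2<>p3 ->
 G0 p0 = false -> G1 p0 = false -> G2 p0 = false ->
 G0 p1 = false -> G1 p1 = true -> G2 p1 = true ->
 G0 p2 = true -> G1 p2 = false -> G2 p2 = true ->
 G0 p3 = true -> G1 p3 = true -> G2 p3 = false ->
 ~xorp G0 -> ~xorp G1 -> ~xorp G2 -> False.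
Proof.
case: p0 => [[] []]; case: p1 => [[] []]; case: p2 => [[] []]; case: p3 => [[] []];
move=> *; first [congruence |
  match goal with
  | N : ~ xorp ?G |- _ => apply: N; split; [congruence | split; congruence]
  end].
Qed.

Lemma xx_inj : injective xx.
Proof.
move=> i k /ffunP E.
have E0 := E ord0; have E1 := E (lift ord0 ord0); have E2 := E ord_max.
rewrite !ffunE /xf /= in E0 E1 E2; clear E.
apply/val_inj; case: i k E0 E1 E2 => [[|[|[|[|i]]]] Hi] [[|[|[|[|k]]]] Hk] //=.
Qed.

Theorem corollary17 :
  exists (n D : nat) (x : 'I_n -> bvec D),
    (2 <= n)%N /\ (1 <= D)%N /\ injective x /\
    ~ perfect_autoencoder D (up_log 2 n) n x.
Proof.
exists 4%N, 3%N, xx; split => //; split => //; split; first exact: xx_inj.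
have -> : up_log 2 4 = 2%N by rewrite (@up_log_eq 2 1 4).
move=> [f [g [_ [Hg Hfg]]]].
pose p (i : 'I_4) := (f (xx i) ord0, f (xx i) (lift ord0 ord0)).
have Hp i : mk (p i) = f (xx i).
  apply/ffunP => k; rewrite ffunE; case: k => [[|[|k]] Hk] //=.
  by congr (f (xx i) _); apply/val_inj.
  by congr (f (xx i) _); apply/val_inj.
pose G (j : 'I_3) (q : bool * bool) := g (mk q) j.
have HG i j : G j (p i) = xf i j by rewrite /G Hp Hfg ffunE.
have Hd i k : i != k -> p i <> p k.
  move=> /eqP ne e; apply: ne; apply: xx_inj.
  by rewrite -(Hfg i) -(Hfg k) -!Hp e.
apply: (@comb (p (@Ordinal 4 0 isT)) (p (@Ordinal 4 1 isT)) (p (@Ordinal 4 2 isT)) (p (@Ordinal 4 3 isT)) (G (@Ordinal 3 0 isT)) (G (@Ordinal 3 1 isT)) (G (@Ordinal 3 2 isT))).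
all: try (apply: Hd; by []).
all: try (rewrite HG; by []).
all: exact: nonxor (Hg _).
Qed.
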